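(* Let $A,B\in\mathbb{M}_k$ be positive definite matrices and let $\Phi:\mathbb{M}_k\to\mathbb{M}_n$ be a unital positive linear map. Then $\mathrm{Tr}\big[\Phi((A+B)^p)^{-1/p}\big]\le\mathrm{Tr}\big[\Phi(A^p)^{-1/p}\big]+\mathrm{Tr}\big[\Phi(B^p)^{-1/p}\big]$ for all $p\in[-1,1]\setminus\{0\}$.
   Context: $\mathbb{M}_n$ denotes $n\times n$ complex matrices, $\mathrm{Tr}$ the trace. Positive linear maps preserve positive semidefiniteness; unital means $\Phi(I)=I$. *)

(* Defs.v *)
From HB Require Import structures.
From mathcomp Require Import all_boot all_order all_algebra.
From mathcomp Require Import complex.
From mathcomp Require Import reals exp.
Set Implicit Arguments.
Unset Strict Implicit.
Unset Printing Implicit Defensive.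
Import Order.TTheory GRing.Theory Num.Theory.
Local Open Scope ring_scope.
Local Open Scope sesquilinear_scope.

Definition psdmx {C : numClosedFieldType} (n : nat) (A : 'M[C]_n) : Prop :=
  A \is hermsymmx /\ forall v : 'rV[C]_n, 0 <= (v *m A *m v ^t*) 0 0.

Definition pdmx {C : numClosedFieldType} (n : nat) (A : 'M[C]_n) : Prop :=
  A \is hermsymmx /\ forall v : 'rV[C]_n, v != 0 -> 0 < (v *m A *m v ^t*) 0 0.

(* Real power A^p of a (positive definite) Hermitian matrix, via the spectral
   decomposition A = U^-1 diag(d) U, U unitary:  A^p = U^-1 diag(d^p) U. *)
Definition mpow {R : realType} (n : nat) (A : 'M[R[i]]_n) (p : R) : 'M[R[i]]_n :=
  invmx (spectralmx A) *m
    diag_mx (map_mx (fun z : R[i] => ((complex.Re z) `^ p)%:C%C) (spectral_diag A))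
  *m spectralmx A.

Definition positive_map {C : numClosedFieldType} (k n : nat)
  (Phi : 'M[C]_k -> 'M[C]_n) : Prop :=
  forall A, psdmx A -> psdmx (Phi A).

Definition unital_map {C : numClosedFieldType} (k n : nat)
  (Phi : 'M[C]_k -> 'M[C]_n) : Prop :=
  Phi 1%:M = 1%:M.

(* Main.v *)
Require Import Defs.
From HB Require Import structures.
From mathcomp Require Import all_boot all_order all_algebra.
From mathcomp Require Import complex.
From mathcomp Require Import reals exp.
From mathcomp Require Import topology normedtype sequences.
From mathcomp Require Import ring lra zify.
Set Implicit Arguments.
Unset Strict Implicit.
Unset Printing Implicit Defensive.
Import Order.TTheory GRing.Theory Num.Theory.
Local Open Scope ring_scope.
Local Open Scope sesquilinear_scope.

Section MxBasics.
Variable C : numClosedFieldType.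

Definition qf n (X : 'M[C]_n) (v : 'rV[C]_n) : C := (v *m X *m v^t*) 0 0.
Definition lemx n (X Y : 'M[C]_n) := forall v, qf X v <= qf Y v.
Definition Fmx n (U : 'M[C]_n) (g : 'I_n -> C) : 'M[C]_n :=
  U^t* *m diag_mx (\row_i g i) *m U.

Lemma adjM m n p (A : 'M[C]_(m, n)) (B : 'M[C]_(n, p)) :
  (A *m B)^t* = B^t* *m A^t*.
Proof. by rewrite trmx_mul map_mxM. Qed.

Lemma adjB m n (A B : 'M[C]_(m, n)) : (A - B)^t* = A^t* - B^t*.
Proof. by rewrite linearB /= map_mxB. Qed.

Lemma adjD m n (A B : 'M[C]_(m, n)) : (A + B)^t* = A^t* + B^t*.
Proof. by rewrite linearD /= map_mxD. Qed.

Lemma adj1 n : (1%:M : 'M[C]_n)^t* = 1%:M.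
Proof. by rewrite trmx1 map_mx1. Qed.

Lemma herm_adj n (X : 'M[C]_n) : X \is hermsymmx -> X^t* = X.
Proof. by move=> /is_hermitianmxP h; rewrite {2}h expr0 scale1r. Qed.

Lemma adj_herm n (X : 'M[C]_n) : X^t* = X -> X \is hermsymmx.
Proof. by move=> h; apply/is_hermitianmxP; rewrite expr0 scale1r h. Qed.

Lemma qf_congr n (N X : 'M[C]_n) v : qf (N *m X *m N^t*) v = qf X (v *m N).
Proof. by rewrite /qf adjM !mulmxA. Qed.

Lemma entryB m n (A B : 'M[C]_(m, n)) i j : (A - B) i j = A i j - B i j.
Proof. by rewrite !mxE. Qed.
Lemma entryD m n (A B : 'M[C]_(m, n)) i j : (A + B) i j = A i j + B i j.
Proof. by rewrite !mxE. Qed.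
Lemma entryZ m n c (A : 'M[C]_(m, n)) i j : (c *: A) i j = c * A i j.
Proof. by rewrite !mxE. Qed.

Lemma qfB n (X Y : 'M[C]_n) v : qf (X - Y) v = qf X v - qf Y v.
Proof. by rewrite /qf mulmxBr mulmxBl entryB. Qed.

Lemma qfD n (X Y : 'M[C]_n) v : qf (X + Y) v = qf X v + qf Y v.
Proof. by rewrite /qf mulmxDr mulmxDl entryD. Qed.

Lemma qfZ n (c : C) (X : 'M[C]_n) v : qf (c *: X) v = c * qf X v.
Proof. by rewrite /qf -scalemxAr -scalemxAl entryZ. Qed.

Definition nrm (z : C) := z * z^*.

Lemma nrm_ge0 z : 0 <= nrm z. Proof. exact: mul_conjC_ge0. Qed.

Lemma qf_diag n (e : 'rV[C]_n) w :
  qf (diag_mx e) w = \sum_j e 0 j * nrm (w 0 j).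
Proof.
rewrite /qf mul_mx_diag mxE; apply: eq_bigr => j _.
by rewrite !mxE /nrm mulrCA mulrA.
Qed.

Lemma unitary_inv n (U : 'M[C]_n) : U \is unitarymx -> U^t* *m U = 1%:M.
Proof. by move/unitarymxP/mulmx1C. Qed.

Lemma qf_F n (U : 'M[C]_n) g v : 
  qf (Fmx U g) v = \sum_j g j * nrm ((v *m U^t*) 0 j).
Proof.
rewrite /Fmx -{2}[U]trmxCK qf_congr qf_diag.
by apply: eq_bigr => j _; rewrite mxE.
Qed.

Lemma F_mul n (U : 'M[C]_n) g h : U \is unitarymx ->
  Fmx U g *m Fmx U h = Fmx U (fun i => g i * h i).
Proof.
move=> uU; rewrite /Fmx !mulmxA -[_ *m U *m U^t*]mulmxA (unitarymxP uU) mulmx1.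
rewrite -[_ *m diag_mx _ *m diag_mx _]mulmxA mulmx_diag; congr (_ *m diag_mx _ *m _).
by apply/rowP => i; rewrite !mxE.
Qed.

Lemma F_const n (U : 'M[C]_n) c : U \is unitarymx ->
  Fmx U (fun _ => c) = c%:M.
Proof.
move=> uU; rewrite /Fmx.
have -> : (\row_(i < n) c) = const_mx c by apply/rowP => i; rewrite !mxE.
by rewrite diag_const_mx mul_mx_scalar -scalemxAl unitary_inv // scalemx1.
Qed.

Lemma F_adj n (U : 'M[C]_n) g : (Fmx U g)^t* = Fmx U (fun i => (g i)^*).
Proof.
rewrite /Fmx !adjM trmxCK mulmxA; congr (_ *m _ *m _).
by rewrite tr_diag_mx map_diag_mx; congr diag_mx; apply/rowP => i; rewrite !mxE.
Qed.

Lemma F_herm n (U : 'M[C]_n) g : (forall i, g i \is Num.real) ->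
  Fmx U g \is hermsymmx.
Proof.
move=> rg; apply: adj_herm; rewrite F_adj /Fmx; congr (_ *m diag_mx _ *m _).
by apply/rowP => i; rewrite !mxE conj_Creal.
Qed.

Lemma rowU_adj n (U : 'M[C]_n) i : U \is unitarymx ->
  row i U *m U^t* = delta_mx 0 i.
Proof. by move=> uU; rewrite -row_mul (unitarymxP uU) rowE mulmx1. Qed.

Lemma qf_rowU n (U : 'M[C]_n) g i : U \is unitarymx ->
  qf (Fmx U g) (row i U) = g i.
Proof.
move=> uU; rewrite qf_F rowU_adj // (bigD1 i) //= big1 ?addr0.
  by rewrite mxE !eqxx /nrm conjC1 !mulr1.
by move=> j /negbTE ji; rewrite mxE ji /nrm mul0r mulr0.
Qed.

Lemma rowU_eig n (U : 'M[C]_n) g i : U \is unitarymx ->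
  row i U *m Fmx U g = g i *: row i U.
Proof.
move=> uU; rewrite /Fmx !mulmxA rowU_adj // rowE -!mulmxA mulmxA.
by rewrite -rowE row_diag_mx mxE -scalemxAl -rowE.
Qed.

Lemma qf_F_le n (U : 'M[C]_n) g h v : (forall i, g i <= h i) ->
  qf (Fmx U g) v <= qf (Fmx U h) v.
Proof.
move=> le; rewrite !qf_F; apply: ler_sum => j _.
by apply: ler_wpM2r; [exact: nrm_ge0 | exact: le].
Qed.

Lemma qf1 n (v : 'rV[C]_n) : qf 1%:M v = \sum_j nrm (v 0 j).
Proof.
by rewrite -diag_const_mx qf_diag; apply: eq_bigr => j _; rewrite mxE mul1r.
Qed.

Lemma qf1_gt0 n (v : 'rV[C]_n) : v != 0 -> 0 < qf 1%:M v.
Proof.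
move=> v0; rewrite qf1.
have [j vj] : exists j, v 0 j != 0.
  apply/existsP; apply: contraNT v0 => /existsPn h.
  by apply/eqP/rowP => j; rewrite mxE; apply/eqP; rewrite -[_ == _]negbK h.
rewrite (bigD1 j) //= ltr_wpDr ?sumr_ge0 // => [i _|]; first exact: nrm_ge0.
by rewrite /nrm mul_conjC_gt0.
Qed.

Lemma qf1_ge0 n (v : 'rV[C]_n) : 0 <= qf 1%:M v.
Proof. by rewrite qf1 sumr_ge0 // => j _; exact: nrm_ge0. Qed.

Lemma qf1_mul n (K : 'M[C]_n) w : qf 1%:M (w *m K) = qf (K *m K^t*) w.
Proof. by rewrite /qf mulmx1 adjM !mulmxA. Qed.

Lemma qf_sub n (X : 'M[C]_n) a b : qf X (a - b) =
  qf X a - (a *m X *m b^t*) 0 0 - (b *m X *m a^t*) 0 0 + qf X b.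
Proof.
rewrite /qf adjB !mulmxBl !mulmxBr !entryB.
set x := (a *m X *m a^t*) 0 0; set y := (a *m X *m b^t*) 0 0.
set z := (b *m X *m a^t*) 0 0; set t := (b *m X *m b^t*) 0 0.
ring.
Qed.

Lemma qf1E n (a : 'rV[C]_n) : qf 1%:M a = (a *m a^t*) 0 0.
Proof. by rewrite /qf mulmx1. Qed.

Lemma contr_adj n (K : 'M[C]_n) :
  (forall w, qf 1%:M (w *m K) <= qf 1%:M w) ->
  forall w, qf 1%:M (w *m K^t*) <= qf 1%:M w.
Proof.
move=> hK w; set a := w *m K^t* *m K.
have e1 : qf 1%:M (w *m K^t*) = (a *m 1%:M *m w^t*) 0 0.
  by rewrite /qf /a !mulmx1 adjM trmxCK !mulmxA.
have e2 : (w *m 1%:M *m a^t*) 0 0 = (a *m 1%:M *m w^t*) 0 0.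
  by rewrite /a !mulmx1 !adjM trmxCK !mulmxA.
have h0 := qf1_ge0 (a - w); rewrite qf_sub e2 -e1 in h0.
have ha : qf 1%:M a <= qf 1%:M (w *m K^t*) by apply: hK.
set s := qf 1%:M (w *m K^t*) in e1 e2 h0 ha *.
have : 0 <= s - s - s + qf 1%:M w.
  by apply: (le_trans h0); rewrite !lerD2r.
by rewrite subrr sub0r addrC subr_ge0.
Qed.

Lemma lemx_inv n (X Y X' Y' : 'M[C]_n) :
  X \is hermsymmx -> X' \is hermsymmx -> Y' \is hermsymmx ->
  (forall v, 0 <= qf X v) -> lemx X Y ->
  X *m X' = 1%:M -> Y *m Y' = 1%:M -> lemx Y' X'.
Proof.
move=> hX hX' hY' X0 le XX' YY' v.
have X'X : X' *m X = 1%:M.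
  by have := congr1 (fun M => M^t*) XX'; rewrite adjM adj1 !herm_adj.
set w := v *m Y'.
have h := X0 (w - v *m X'); rewrite qf_sub in h.
have e1 : qf X (v *m X') = qf X' v.
  by rewrite /qf adjM herm_adj // !mulmxA -[v *m X' *m X]mulmxA X'X mulmx1.
have e2 : (w *m X *m (v *m X')^t*) 0 0 = qf Y' v.
  by rewrite /qf /w adjM herm_adj // !mulmxA -[v *m Y' *m X *m X']mulmxA XX' mulmx1.
have e3 : (v *m X' *m X *m w^t*) 0 0 = qf Y' v.
  by rewrite /qf /w adjM herm_adj // -[v *m X' *m X]mulmxA X'X mulmx1 mulmxA.
have e4 : qf Y w = qf Y' v.
  by rewrite /qf /w adjM herm_adj // !mulmxA -[v *m Y' *m Y *m Y']mulmxA YY' mulmx1.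
rewrite e1 e2 e3 in h.
have : 0 <= qf Y' v - qf Y' v - qf Y' v + qf X' v.
  by apply: (le_trans h); rewrite !lerD2r -e4; exact: le.
by rewrite subrr sub0r addrC subr_ge0.
Qed.

End MxBasics.

Section Spec.
Variable R : realType.
Local Notation C := (R[i]).

Definition ev n (X : 'M[C]_n) i : R := complex.Re (spectral_diag X 0 i).

Lemma real_RC (x : C) : x \is Num.real -> x = (complex.Re x)%:C%C.
Proof.
case: x => a b; rewrite realE !lecE /= => /orP [] /andP [/eqP h _].
  by rewrite h.
by rewrite -h.
Qed.

Lemma realC (x : R) : (x%:C%C : C) \is Num.real.
Proof. by rewrite realE -[0 : C]/(0%:C%C) !lecR le_total. Qed.

Lemma ltC (x y : R) : ((x%:C%C : C) < y%:C%C) = (x < y).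
Proof. exact: ltcR. Qed.
Lemma leC (x y : R) : ((x%:C%C : C) <= y%:C%C) = (x <= y).
Proof. exact: lecR. Qed.

Lemma herm_spec n (X : 'M[C]_n) : X \is hermsymmx ->
  X = Fmx (spectralmx X) (fun i => (ev X i)%:C%C).
Proof.
move=> hX; have /orthomx_spectralP E := hermitian_normalmx hX.
rewrite {1}E invmx_unitary ?spectral_unitarymx //; rewrite /Fmx.
congr (_ *m diag_mx _ *m _); apply/rowP => i; rewrite mxE /ev.
apply: real_RC.
by have /mxOverP := hermitian_spectral_diag_real hX; apply.
Qed.

Lemma mpowE n (X : 'M[C]_n) p :
  mpow X p = Fmx (spectralmx X) (fun i => ((ev X i) `^ p)%:C%C).
Proof.
rewrite /mpow invmx_unitary; last exact: spectral_unitarymx.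
have E : map_mx (fun z : R[i] => ((complex.Re z) `^ p)%:C%C) (spectral_diag X)
   = \row_i ((ev X i) `^ p)%:C%C by apply/rowP => i; rewrite !mxE.
by rewrite E.
Qed.

Lemma pd_herm n (X : 'M[C]_n) : pdmx X -> X \is hermsymmx.
Proof. by case. Qed.

Lemma rowU_neq0 n (U : 'M[C]_n) i : U \is unitarymx -> row i U != 0.
Proof.
move=> uU; apply/eqP => h; have := rowU_adj i uU; rewrite h mul0mx.
move/matrixP/(_ 0 i); rewrite !mxE !eqxx => /eqP; by rewrite eq_sym oner_eq0.
Qed.

Lemma pd_ev_gt0 n (X : 'M[C]_n) i : pdmx X -> 0 < ev X i.
Proof.
move=> pX; have hX := pd_herm pX.
have := pX.2 (row i (spectralmx X)) (rowU_neq0 i (spectral_unitarymx X)).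
rewrite -/(qf X _) {1}(herm_spec hX) qf_rowU ?spectral_unitarymx //.
by rewrite -[0 : C]/(0%:C%C) ltC.
Qed.

Lemma mpow_herm n (X : 'M[C]_n) p : mpow X p \is hermsymmx.
Proof. by rewrite mpowE; apply: F_herm => i; exact: realC. Qed.

Lemma mpowM n (X : 'M[C]_n) s t : pdmx X ->
  mpow X s *m mpow X t = mpow X (s + t).
Proof.
move=> pX; rewrite !mpowE F_mul ?spectral_unitarymx //; congr Fmx.
apply: boolp.funext => i; rewrite -rmorphM /= powRD //.
by apply/implyP => _; rewrite gt_eqF // pd_ev_gt0.
Qed.

Lemma mpow0 n (X : 'M[C]_n) : mpow X 0 = 1%:M.
Proof.
rewrite mpowE -(F_const 1 (spectral_unitarymx X)); congr Fmx.
by apply: boolp.funext => i; rewrite powRr0.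
Qed.

Lemma mpow1 n (X : 'M[C]_n) : pdmx X -> mpow X 1 = X.
Proof.
move=> pX; rewrite mpowE {3}(herm_spec (pd_herm pX)); congr Fmx.
by apply: boolp.funext => i; rewrite powRr1 // ltW // pd_ev_gt0.
Qed.

Lemma pos_lb n (e : 'I_n -> R) : (forall i, 0 < e i) ->
  exists c, 0 < c /\ forall i, c <= e i.
Proof.
move=> he; exists (1 + \sum_i (e i)^-1)^-1; split.
  by rewrite invr_gt0 ltr_wpDr // sumr_ge0 // => i _; rewrite invr_ge0 ltW.
move=> i; rewrite -[e i]invrK lef_pV2 ?posrE ?invr_gt0 //; last first.
  by rewrite ltr_wpDr // sumr_ge0 // => j _; rewrite invr_ge0 ltW.
rewrite (bigD1 i) //= addrA ler_wpDr // ?sumr_ge0 //; last by rewrite lerDr.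
by move=> j _; rewrite invr_ge0 ltW.
Qed.

Lemma lemx_refl n (X : 'M[C]_n) : lemx X X.
Proof. by move=> v. Qed.

Lemma lemx_trans n (X Y Z : 'M[C]_n) : lemx X Y -> lemx Y Z -> lemx X Z.
Proof. by move=> h1 h2 v; apply: le_trans (h1 v) (h2 v). Qed.

Lemma mpow_lb n (X : 'M[C]_n) p : pdmx X ->
  exists c : R, 0 < c /\ lemx ((c%:C%C : C)%:M) (mpow X p).
Proof.
move=> pX; have [c [c0 hc]] := @pos_lb n (fun i => (ev X i) `^ p)
  (fun i => powR_gt0 p (pd_ev_gt0 i pX)).
exists c; split => // v; rewrite mpowE -(F_const _ (spectral_unitarymx X)).
by apply: qf_F_le => i; rewrite leC.
Qed.

Lemma lb_pd n (X : 'M[C]_n) (c : R) : X \is hermsymmx -> 0 < c ->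
  lemx ((c%:C%C : C)%:M) X -> pdmx X.
Proof.
move=> hX c0 le; split => // v v0; apply: lt_le_trans (le v).
rewrite -scalemx1 -/(qf _ _) qfZ mulr_gt0 ?qf1_gt0 //.
by rewrite -[0 : C]/(0%:C%C) ltC.
Qed.

Lemma mpow_pd n (X : 'M[C]_n) p : pdmx X -> pdmx (mpow X p).
Proof.
move=> pX; have [c [c0 hc]] := mpow_lb p pX.
exact: lb_pd (mpow_herm _ _) c0 hc.
Qed.

Lemma pd_psd n (X : 'M[C]_n) : pdmx X -> psdmx X.
Proof.
move=> pX; split; first exact: pd_herm.
move=> v; have [->|v0] := eqVneq v 0.
  by rewrite mul0mx mul0mx mxE.
exact/ltW/pX.2.
Qed.

Lemma tr_mpow n (X : 'M[C]_n) s :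
  \tr (mpow X s) = (\sum_i (ev X i) `^ s)%:C%C.
Proof.
rewrite mpowE /Fmx mxtrace_mulC mulmxA (unitarymxP (spectral_unitarymx X)).
rewrite mul1mx mxtrace_diag rmorph_sum /=; apply: eq_bigr => i _.
by rewrite mxE.
Qed.

End Spec.

Section LH.
Variable R : realType.
Local Notation C := (R[i]).

Lemma adjMR n (A B : 'M[C]_n) : (A *m B)^t* = B^t* *m A^t*.
Proof. exact: adjM. Qed.
Lemma qf_congrR n (N X : 'M[C]_n) v : qf (N *m X *m N^t*) v = qf X (v *m N).
Proof. exact: qf_congr. Qed.
Lemma qf1_mulR n (K : 'M[C]_n) w : qf 1%:M (w *m K) = qf (K *m K^t*) w.
Proof. exact: qf1_mul. Qed.

Lemma contr_adjR n (K : 'M[C]_n) :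
  (forall w, qf 1%:M (w *m K) <= qf 1%:M w) ->
  forall w, qf 1%:M (w *m K^t*) <= qf 1%:M w.
Proof. exact: contr_adj. Qed.

Fact P_key : unit. Proof. by []. Qed.
Definition P := locked_with P_key (@mpow R).
Lemma PE : P = @mpow R. Proof. by rewrite /P unlock. Qed.

Lemma PM' n (X : 'M[C]_n) s t u : pdmx X -> s + t = u ->
  P X s *m P X t = P X u.
Proof. by rewrite PE => pX <-; exact: mpowM. Qed.

Lemma P_adj n (X : 'M[C]_n) s : (P X s)^t* = P X s.
Proof. by rewrite PE; exact/herm_adj/mpow_herm. Qed.

Lemma P_herm n (X : 'M[C]_n) s : P X s \is hermsymmx.
Proof. by rewrite PE; exact: mpow_herm. Qed.

Lemma P0 n (X : 'M[C]_n) : P X 0 = 1%:M.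
Proof. by rewrite PE; exact: mpow0. Qed.

Lemma P1 n (X : 'M[C]_n) : pdmx X -> P X 1 = X.
Proof. by rewrite PE; exact: mpow1. Qed.

Lemma P_pd n (X : 'M[C]_n) s : pdmx X -> pdmx (P X s).
Proof. by rewrite PE; exact: mpow_pd. Qed.

Section Pair.
Variables (n : nat) (A B : 'M[C]_n).
Hypotheses (pA : pdmx A) (pB : pdmx B).
Local Notation PA := (P A).
Local Notation PB := (P B).

Lemma contr_of_le t h : h + h = t -> lemx (PA t) (PB t) ->
  forall w, qf 1%:M (w *m (PB (-h) *m PA h)) <= qf 1%:M w.
Proof.
move=> ht le w.
have E : (PB (-h) *m PA h) *m (PB (-h) *m PA h)^t* = PB (-h) *m PA t *m (PB (-h))^t*.
  rewrite !adjMR !P_adj !mulmxA -[PB (-h) *m _ *m _]mulmxA.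
  by rewrite (PM' pA ht).
rewrite qf1_mulR E qf_congrR; apply: (le_trans (le _)); rewrite -qf_congrR P_adj.
rewrite (PM' pB (u := t - h)); last by ring.
rewrite (PM' pB (u := 0)); last by rewrite -ht; ring.
by rewrite P0.
Qed.

Lemma lemx_mid p q : lemx (PA p) (PB p) -> lemx (PA q) (PB q) ->
  lemx (PA ((p + q) / 2)) (PB ((p + q) / 2)).
Proof.
move=> hp hq; set r := (p + q) / 2.
set a : R := r / 2; set pp : R := p / 2; set qq : R := q / 2; set d : R := (p - q) / 4.
have e1 : d + -pp = -a by rewrite /d /pp /a /r; field.
have e2 : pp + qq = r by rewrite /pp /qq /r; field.
have e3 : -a + (a - qq) = -qq by ring.
have e4 : d = a - qq by rewrite /d /a /qq /r; field.
have e5 : d + -d = 0 by ring.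
have e6 : a + -a = 0 by ring.
have e7 : -a + a = 0 by ring.
have e8 : a + a = r by rewrite /a; field.
have e9 : pp + pp = p by rewrite /pp; field.
have e10 : qq + qq = q by rewrite /qq; field.
set T := PB (-a) *m PA r *m PB (-a).
have hT : T \is hermsymmx.
  by apply: adj_herm; rewrite /T !adjMR !P_adj mulmxA.
set U := spectralmx T.
have uU : U \is unitarymx by exact: spectral_unitarymx.
have evle : forall i, ev T i <= 1.
  move=> i; set u := row i U; set e := ev T i.
  have eig : u *m T = (e%:C%C : C) *: u.
    by rewrite {1}(herm_spec hT) rowU_eig.
  set y := u *m PB d.
  have y0 : y != 0.
    apply/eqP => y0; have := rowU_neq0 i uU; rewrite -/u.
    have -> : u = y *m PB (-d).
      by rewrite /y -mulmxA (PM' pB e5) P0 mulmx1.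
    by rewrite y0 mul0mx eqxx.
  set Kp := PB (-pp) *m PA pp; set Kq := PB (-qq) *m PA qq.
  have key : y *m Kp *m Kq^t* = (e%:C%C : C) *: y.
    have E1 : y *m Kp *m Kq^t* = u *m PB (-a) *m PA r *m PB (-qq).
      rewrite /Kq adjMR !P_adj /y /Kp !mulmxA.
      rewrite -[u *m _ *m PB (-pp)]mulmxA (PM' pB e1).
      by rewrite -[u *m _ *m PA pp *m PA qq]mulmxA (PM' pA e2).
    have E2 : u *m T *m PB (a - qq) = u *m PB (-a) *m PA r *m PB (-qq).
      by rewrite /T !mulmxA -mulmxA (PM' pB e3).
    by rewrite E1 -E2 eig -scalemxAl /y e4.
  have c1 : qf 1%:M (y *m Kp *m Kq^t*) <= qf 1%:M y.
    have c0 := contr_of_le e9 hp y.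
    have c2 := contr_adjR (contr_of_le e10 hq) (y *m Kp).
    exact: le_trans c2 c0.
  rewrite key in c1.
  have E3 : qf 1%:M ((e%:C%C : C) *: y) = ((e * e)%:C%C : C) * qf 1%:M y.
    rewrite /qf mulmx1 mulmx1 -scalemxAl linearZ /= map_mxZ -scalemxAr !entryZ.
    rewrite [X in _ * (X * _)](_ : _ = (e%:C%C : C)); last exact: (conj_Creal (realC e)).
    by rewrite mulrA -rmorphM.
  rewrite E3 in c1.
  move: c1; rewrite -{2}[qf 1%:M y]mul1r ler_pM2r ?qf1_gt0 // -[1 : C]/(1%:C%C) leC.
  by move=> h; nra.
have Tle : lemx T 1%:M.
  move=> v; rewrite {1}(herm_spec hT) -(F_const 1 uU); apply: qf_F_le => i.
  by rewrite -[1 : C]/(1%:C%C) leC.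
move=> v.
have -> : PA r = PB a *m T *m (PB a)^t*.
  rewrite P_adj /T !mulmxA (PM' pB e6) P0 mul1mx.
  by rewrite -mulmxA (PM' pB e7) P0 mulmx1.
rewrite qf_congrR; apply: (le_trans (Tle _)); rewrite -qf_congrR mulmx1 P_adj.
by rewrite (PM' pB e8).
Qed.

End Pair.

End LH.

Import numFieldNormedType.Exports.

Section Cont.
Variable R : realType.
Local Notation C := (R[i]).

Lemma cont_pow (b : R) : 0 < b -> continuous (fun t : R => b `^ t).
Proof.
move=> b0 t.
have -> : (fun t : R => b `^ t) = (fun t => expR (t * ln b)).
  by apply: boolp.funext => s; rewrite /powR gt_eqF.
apply: continuous_comp; last exact: continuous_expR.
apply: continuousM => //; exact: cvg_cst.
Qed.

Lemma cont_delta (H : R -> R) t : {for t, continuous H} -> H t < 0 ->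
  exists2 d, 0 < d & forall s, `|t - s| < d -> H s < 0.
Proof.
move=> cH Ht.
have Ht' : 0 < - H t by rewrite oppr_gt0.
have h0 := cvgr_dist_lt _ _ cH _ Ht'.
have := (nbhs_ballP _ _).1 (h0 _).
rewrite /nbhs_ball /nbhs_ball_ => -[d /= d0 hd]; exists d => // s ts.
have := hd s; rewrite /ball /= => /(_ ts).
move=> h; have := ler_norm (H s - H t); rewrite distrC in h; lra.
Qed.

Lemma cont_sum n (F : 'I_n -> R -> R) t :
  (forall j, {for t, continuous (F j)}) ->
  {for t, continuous (fun s => \sum_j F j s)}.
Proof.
move=> hF; rewrite unlock /=; elim: (index_enum _) => [|a r IH] /=.
  exact: cvg_cst.
exact: continuousD.
Qed.

Lemma dyadic_approx (t d : R) : 0 <= t <= 1 -> 0 < d ->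
  exists m k, (k <= 2 ^ m)%N /\ `|t - k%:R / (2 ^ m)%:R| < d.
Proof.
move=> /andP [t0 t1] d0.
set M := (Num.truncn d^-1).+1.
have hM : d^-1 < M%:R by exact: truncnS_gt.
have hM2 : (M < 2 ^ M)%N by exact: ltn_expl.
set D : R := (2 ^ M)%:R.
have D0 : 0 < D by rewrite /D ltr0n expn_gt0.
have dD : d^-1 < D by apply: lt_trans hM _; rewrite /D ltr_nat.
have h1 : 1 < d * D.
  by rewrite -(mulfV (lt0r_neq0 d0)) ltr_pM2l.
have tD0 : 0 <= t * D by rewrite mulr_ge0 // ltW.
have [hk1 hk2] := andP (truncn_itv tD0).
exists M, (Num.truncn (t * D)); split.
  rewrite -(ler_nat R) (le_trans hk1) // -/D.
  by rewrite -{2}[D]mul1r ler_pM2r.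
set u := (Num.truncn (t * D))%:R in hk1 hk2 *.
have -> : t - u / D = (t * D - u) / D by field; rewrite lt0r_neq0.
rewrite ger0_norm; last by rewrite divr_ge0 ?subr_ge0 // ltW.
rewrite ltr_pdivrMr //.
have : (Num.truncn (t * D)).+1%:R = u + 1 :> R by rewrite -natr1.
nra.
Qed.

End Cont.

Section LHfull.
Variable R : realType.
Local Notation C := (R[i]).

Definition gf n (X : 'M[C]_n) (v : 'rV[C]_n) (t : R) : R :=
  \sum_j ev X j `^ t * complex.Re (nrm ((v *m (spectralmx X)^t*) 0 j)).

Lemma qfP n (X : 'M[C]_n) v t : qf (P X t) v = (gf X v t)%:C%C.
Proof.
rewrite PE mpowE qf_F rmorph_sum; apply: eq_bigr => j _.
rewrite rmorphM /=; congr (_ * _); apply: real_RC.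
exact: ger0_real (nrm_ge0 _).
Qed.

Lemma gf_cont n (X : 'M[C]_n) v t : pdmx X -> {for t, continuous (gf X v)}.
Proof.
move=> pX; apply: cont_sum => j; apply: continuousM; last exact: cvg_cst.
exact: cont_pow (pd_ev_gt0 j pX) t.
Qed.

Section Pair2.
Variables (n : nat) (A B : 'M[C]_n).
Hypotheses (pA : pdmx A) (pB : pdmx B) (AB : lemx A B).

Lemma good_dyadic m k : (k <= 2 ^ m)%N ->
  lemx (P A (k%:R / (2 ^ m)%:R)) (P B (k%:R / (2 ^ m)%:R)).
Proof.
elim: m k => [|m IH] k.
  rewrite expn0 => hk; rewrite divr1.
  case: k hk => [_|[_|//]].
    by rewrite !P0; exact: lemx_refl.
  by rewrite !P1.
move=> hk; have D0 : (2 ^ m)%:R != 0 :> R by rewrite pnatr_eq0 expn_eq0.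
case/boolP: (odd k) => ok.
  have hk' : (k./2 < 2 ^ m)%N.
    have e := odd_double_half k; rewrite ok -muln2 in e.
    move: hk; rewrite expnS; lia.
  have := lemx_mid pA pB (IH _ (ltnW hk')) (IH _ hk').
  have -> : ((k./2)%:R / (2 ^ m)%:R + (k./2).+1%:R / (2 ^ m)%:R) / 2
       = k%:R / (2 ^ m.+1)%:R :> R.
    rewrite -{3}(odd_double_half k) ok expnS natrM natrD -natr1 -muln2 natrM.
    rewrite [true%:R](_ : _ = 1) //.
    by field; rewrite D0.
  by [].
have -> : k%:R / (2 ^ m.+1)%:R = (k./2)%:R / (2 ^ m)%:R :> R.
  rewrite -{1}(odd_double_half k) (negbTE ok) add0n expnS natrM -muln2 natrM.
  by field; rewrite D0.
apply: IH; have e := odd_double_half k; rewrite (negbTE ok) -muln2 in e.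
move: hk; rewrite expnS; lia.
Qed.

Lemma LH t : 0 <= t <= 1 -> lemx (P A t) (P B t).
Proof.
move=> t01 v; rewrite !qfP leC -subr_ge0.
set H := fun s => gf B v s - gf A v s.
rewrite -/(H t) leNgt; apply/negP => Ht.
have cH : {for t, continuous H}.
  by apply: continuousB; apply: gf_cont.
have [d d0 hd] := cont_delta cH Ht.
have [m [k [hk hkd]]] := dyadic_approx t01 d0.
have := hd _ hkd; rewrite /H subr_lt0.
have := good_dyadic hk v; rewrite !qfP leC => h1 h2.
by move: (lt_le_trans h2 h1); rewrite ltxx.
Qed.

End Pair2.
End LHfull.

Section Tangent.
Variable R : realType.

Lemma tangent_neg (s x y : R) : s <= 0 -> 0 < x -> 0 < y ->
  y `^ s + s * y `^ (s - 1) * (x - y) <= x `^ s.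
Proof.
move=> s0 x0 y0; set t := x / y.
have t0 : 0 < t by rewrite divr_gt0.
have ex : x = t * y by rewrite /t mulfVK // gt_eqF.
have ys0 : 0 < y `^ s by rewrite powR_gt0.
have E1 : y `^ (s - 1) = y `^ s / y.
  rewrite powRB; last by apply/implyP => _; rewrite gt_eqF.
  by rewrite powRr1 // ltW.
have E2 : y `^ s + s * y `^ (s - 1) * (x - y) = y `^ s * (1 + s * (t - 1)).
  by rewrite E1 /t; field; rewrite gt_eqF.
rewrite E2 ex (powRM _ (ltW t0) (ltW y0)) mulrC ler_pM2r //.
have h1 : 1 + s * ln t <= t `^ s.
  by rewrite /powR gt_eqF // mulrC; exact: expR_ge1Dx.
have h2 : ln t <= t - 1.
  have := @le_ln1Dx R (t - 1); rewrite (addrC 1 (t - 1)) subrK; apply; lra.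
apply: le_trans h1; rewrite lerD2l; exact: ler_wnM2l.
Qed.

Lemma tangent_pos (s x y : R) : 1 <= s -> 0 < x -> 0 < y ->
  y `^ s + s * y `^ (s - 1) * (x - y) <= x `^ s.
Proof.
move=> s1 x0 y0; have [e1|s1'] := eqVneq s 1.
  by rewrite e1 subrr powRr0 !powRr1 ?(ltW x0) ?(ltW y0) // !mul1r addrC subrK.
have s1s : 1 < s by rewrite lt_neqAle eq_sym s1' s1.
have s0 : 0 < s by lra.
set Q := y `^ (s - 1); set X := x `^ s; set Ys := y `^ s.
have hY : Ys = Q * y.
  rewrite /Ys /Q -{3}[y](powRr1 (ltW y0)) -powRD; first by rewrite subrK.
  by apply/implyP => _; rewrite gt_eqF.
have q0 : 0 < s / (s - 1) by rewrite divr_gt0 //; lra.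
have hq : s^-1 + (s / (s - 1))^-1 = 1 by field; lra.
have Q0 : 0 <= Q by exact: powR_ge0.
have hy := conjugate_powR (ltW x0) Q0 s0 q0 hq.
have EQ : Q `^ (s / (s - 1)) = Ys.
  by rewrite /Q -powRrM /Ys; congr (_ `^ _); field; lra.
rewrite EQ in hy.
have hy2 : s * (x * Q) <= X + (s - 1) * Ys.
  have -> : X + (s - 1) * Ys = s * (X / s + Ys / (s / (s - 1))).
    by field; lra.
  by rewrite ler_pM2l.
rewrite hY; rewrite hY in hy2; nra.
Qed.

End Tangent.

Section Klein.
Variable R : realType.
Local Notation C := (R[i]).

Lemma nrm_conj (z : C) : nrm z^* = nrm z.
Proof. by rewrite /nrm conjCK mulrC. Qed.

Lemma rowsum1 n (U V : 'M[C]_n) j : U \is unitarymx -> V \is unitarymx ->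
  \sum_i nrm ((row j V *m U^t*) 0 i) = 1.
Proof.
move=> uU uV.
have := qf_F U (fun _ => 1) (row j V); rewrite F_const //.
rewrite -(F_const 1 uV) qf_rowU // => ->.
by apply: eq_bigr => i _; rewrite mul1r.
Qed.

Lemma entry_swap n (U V : 'M[C]_n) i j :
  nrm ((row j V *m U^t*) 0 i) = nrm ((row i U *m V^t*) 0 j).
Proof.
rewrite -!row_mul !mxE -nrm_conj; congr nrm.
have := congr1 (fun M : 'M[C]_n => M i j) (adjM V (U^t*)); rewrite trmxCK.
by rewrite !mxE => <-.
Qed.

Lemma sum_aff n (w x : 'I_n -> C) (F G B : C) : \sum_i w i = 1 ->
  F + G * (\sum_i x i * w i - B) = \sum_i w i * (F + G * (x i - B)).
Proof.
move=> hw.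
transitivity (\sum_i (F * w i + G * (x i * w i) - G * B * w i)).
  rewrite sumrB big_split /= -mulr_sumr -mulr_sumr -mulr_sumr hw; ring.
by apply: eq_bigr => i _; ring.
Qed.

Lemma klein n (U V : 'M[C]_n) (a b : 'I_n -> R) (f g : R -> R) :
  U \is unitarymx -> V \is unitarymx ->
  (forall i j, f (b j) + g (b j) * (a i - b j) <= f (a i)) ->
  \sum_j ((f (b j))%:C%C + (g (b j))%:C%C *
     (qf (Fmx U (fun i => (a i)%:C%C)) (row j V) - (b j)%:C%C))
  <= \sum_i ((f (a i))%:C%C : C).
Proof.
move=> uU uV tg.
set nr := fun j i => nrm ((row j V *m U^t*) 0 i).
have cs : forall i, \sum_j nr j i = 1.
  move=> i; rewrite /nr; under eq_bigr do rewrite entry_swap.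
  exact: rowsum1.
have -> : \sum_i ((f (a i))%:C%C : C) = \sum_j \sum_i nr j i * (f (a i))%:C%C.
  rewrite exchange_big /=; apply: eq_bigr => i _.
  by rewrite -mulr_suml cs mul1r.
apply: ler_sum => j _.
have E : (f (b j))%:C%C + (g (b j))%:C%C *
     (qf (Fmx U (fun i => (a i)%:C%C)) (row j V) - (b j)%:C%C)
   = \sum_i nr j i * ((f (b j))%:C%C + (g (b j))%:C%C * ((a i)%:C%C - (b j)%:C%C)) :> C.
  rewrite qf_F; apply: sum_aff; exact: rowsum1.
rewrite E; apply: ler_sum => i _; apply: ler_wpM2l; first exact: nrm_ge0.
rewrite -!rmorphB -!rmorphM -rmorphD leC; exact: tg.
Qed.

End Klein.

Section Final.
Variable R : realType.
Local Notation C := (R[i]).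

Lemma sumC m (F : 'I_m -> R) : ((\sum_i F i)%:C%C : C) = \sum_i (F i)%:C%C.
Proof. exact: rmorph_sum. Qed.

Lemma ev_row n (Y : 'M[C]_n) j : Y \is hermsymmx ->
  qf Y (row j (spectralmx Y)) = (ev Y j)%:C%C.
Proof. by move=> hY; rewrite {1}(herm_spec hY) qf_rowU ?spectral_unitarymx. Qed.

Lemma tr_mono_neg n (X Y : 'M[C]_n) s : pdmx X -> pdmx Y -> lemx X Y ->
  s <= 0 -> \tr (P Y s) <= \tr (P X s).
Proof.
move=> pX pY le s0; rewrite PE !tr_mpow.
have hX := pd_herm pX; have hY := pd_herm pY.
have K := @klein R n (spectralmx X) (spectralmx Y) (ev X) (ev Y)
  (fun x => x `^ s) (fun x => s * x `^ (s - 1))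
  (spectral_unitarymx X) (spectral_unitarymx Y)
  (fun i j => tangent_neg s0 (pd_ev_gt0 i pX) (pd_ev_gt0 j pY)).
rewrite -(herm_spec hX) /= in K.
rewrite !sumC; apply: (le_trans _ K); apply: ler_sum => j _.
rewrite lerDl -(ev_row j hY); apply: mulr_le0.
  rewrite -[0 : C]/(0%:C%C) leC; apply: mulr_le0_ge0 => //; exact: powR_ge0.
by rewrite subr_le0.
Qed.

Lemma tr_mono_pos n (X Y : 'M[C]_n) s : pdmx X -> pdmx Y -> lemx X Y ->
  1 <= s -> \tr (P X s) <= \tr (P Y s).
Proof.
move=> pX pY le s1; rewrite PE !tr_mpow.
have hX := pd_herm pX; have hY := pd_herm pY.
have K := @klein R n (spectralmx Y) (spectralmx X) (ev Y) (ev X)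
  (fun x => x `^ s) (fun x => s * x `^ (s - 1))
  (spectral_unitarymx Y) (spectral_unitarymx X)
  (fun i j => tangent_pos s1 (pd_ev_gt0 i pY) (pd_ev_gt0 j pX)).
rewrite -(herm_spec hY) /= in K.
rewrite !sumC; apply: (le_trans _ K); apply: ler_sum => j _.
rewrite lerDl -(ev_row j hX); apply: mulr_ge0.
  rewrite -[0 : C]/(0%:C%C) leC; apply: mulr_ge0; first lra.
  exact: powR_ge0.
by rewrite subr_ge0.
Qed.

Lemma tr_ge0 n (X : 'M[C]_n) s : 0 <= \tr (P X s).
Proof.
rewrite PE tr_mpow -[0 : C]/(0%:C%C) leC; apply: sumr_ge0 => i _.
exact: powR_ge0.
Qed.

Variables (k n : nat) (Phi : {linear 'M[C]_k -> 'M[C]_n}).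
Hypotheses (posPhi : positive_map Phi) (uPhi : unital_map Phi).

Lemma Phi_mono (X Y : 'M[C]_k) : X \is hermsymmx -> Y \is hermsymmx ->
  lemx X Y -> lemx (Phi X) (Phi Y).
Proof.
move=> hX hY le v.
have pD : psdmx (Y - X).
  split.
    by apply: adj_herm; rewrite adjB !herm_adj.
  by move=> w; rewrite -/(qf _ _) qfB subr_ge0.
have := (posPhi pD).2 v; rewrite -/(qf _ _) linearB qfB subr_ge0.
by [].
Qed.

Lemma Phi_herm (X : 'M[C]_k) : pdmx X -> Phi X \is hermsymmx.
Proof. by move=> pX; case: (posPhi (pd_psd pX)). Qed.

Lemma scal_herm m (c : R) : ((c%:C%C : C)%:M : 'M[C]_m) \is hermsymmx.
Proof.
apply: adj_herm; rewrite tr_scalar_mx map_scalar_mx /=; congr (_%:M).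
exact: conj_Creal (realC c).
Qed.

Lemma Phi_pd (X : 'M[C]_k) : pdmx X -> pdmx (Phi X).
Proof.
move=> pX; have [c [c0 hc]] := mpow_lb 1 pX.
rewrite mpow1 // in hc.
apply: (lb_pd (Phi_herm pX) c0).
have := Phi_mono (scal_herm _ c) (pd_herm pX) hc.
by rewrite -scalemx1 linearZ /= uPhi scalemx1.
Qed.

End Final.

Lemma PE2 (R : realType) n (X : 'M[R[i]]_n) t : mpow X t = P X t.
Proof. by rewrite PE. Qed.

Local Close Scope sesquilinear_scope.
Unset Implicit Arguments.
Theorem corollary4p1 (R : realType) (k n : nat)
  (A B : 'M[R[i]]_k) (Phi : {linear 'M[R[i]]_k -> 'M[R[i]]_n}) (p : R) :
  pdmx A -> pdmx B -> positive_map Phi -> unital_map Phi ->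
  -1 <= p <= 1 -> p != 0 ->
  \tr (mpow (Phi (mpow (A + B) p)) (- p^-1))
    <= \tr (mpow (Phi (mpow A p)) (- p^-1)) + \tr (mpow (Phi (mpow B p)) (- p^-1)).
Proof.
move=> pA pB posP uP /andP [p1 p2] p0.
rewrite !PE2.
have pC : pdmx (A + B).
  split; first by apply: adj_herm; rewrite adjD !herm_adj //; exact: pd_herm.
  move=> v v0; rewrite -/(qf _ _) qfD; apply: addr_gt0; [exact: pA.2 | exact: pB.2].
have AC : lemx A (A + B).
  by move=> v; rewrite qfD lerDl; exact: (pd_psd pB).2.
have [pp|pn] := ltrP 0 p.
  have LHp := LH pA pC AC (t := p) (ltac:(apply/andP; split; [exact: ltW | exact: p2])).
  have lXY := Phi_mono posP (P_herm A p) (P_herm (A + B) p) LHp.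
  have s0 : - p^-1 <= 0 by rewrite oppr_le0 invr_ge0 ltW.
  have h := tr_mono_neg (Phi_pd posP uP (P_pd p pA)) (Phi_pd posP uP (P_pd p pC)) lXY s0.
  apply: (le_trans h); rewrite lerDl; exact: tr_ge0.
have pn' : p < 0 by rewrite lt_neqAle p0 pn.
set q := - p.
have q01 : 0 <= q <= 1 by apply/andP; split; rewrite /q; lra.
have LHq := LH pA pC AC q01.
have e1 : q + p = 0 by rewrite /q; ring.
have inv : lemx (P (A + B) p) (P A p).
  apply: (lemx_inv (P_herm A q) (P_herm A p) (P_herm (A + B) p) _ LHq).
  - exact: (pd_psd (P_pd q pA)).2.
  - by rewrite (PM' pA e1) P0.
  - by rewrite (PM' pC e1) P0.
have lXY := Phi_mono posP (P_herm (A + B) p) (P_herm A p) inv.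
have s1 : 1 <= - p^-1.
  rewrite -invrN invf_ge1 /=; [by rewrite -/q; lra | by rewrite oppr_gt0].
have h := tr_mono_pos (Phi_pd posP uP (P_pd p pC)) (Phi_pd posP uP (P_pd p pA)) lXY s1.
apply: (le_trans h); rewrite lerDl; exact: tr_ge0.
Qed.
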